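(* Let $S$ be a semigroup and $a\in S$ an idempotent such that every element of $\{a\}\cup aSa$ has exactly one inverse in $S$. Then $\operatorname{Reg}(Sa)=P=aSa$, where $P=\{x\in Sa: x\,\mathscr L\,ax\}$, and this is an inverse monoid.
   Context: An inverse of $x\in S$ is $y\in S$ with $x=xyx$ and $y=yxy$. $\operatorname{Reg}(Sa)$ is the set of regular elements of the semigroup $Sa=\{xa:x\in S\}$; $aSa=\{axa:x\in S\}$. $\mathscr L$ is Green's $\mathscr L$-relation on $S$. A semigroup is inverse if every element has exactly one inverse in it. *)

(* Defs.v *)
Set Implicit Arguments.

Section Semigroup.
Variables (T : Type) (mul : T -> T -> T).

Definition is_inverse (x y : T) : Prop :=
  x = mul (mul x y) x /\ y = mul (mul y x) y.

Definition unique_inverse (x : T) : Prop :=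
  exists y, is_inverse x y /\ forall z, is_inverse x z -> z = y.

Definition Sa (a : T) (x : T) : Prop := exists s, x = mul s a.

Definition aSa (a : T) (x : T) : Prop := exists s, x = mul (mul a s) a.

(* Green's L relation on S: S^1 x = S^1 y *)
Definition GreenL (x y : T) : Prop :=
  (x = y \/ exists s, x = mul s y) /\ (y = x \/ exists t, y = mul t x).

Definition Reg (M : T -> Prop) (x : T) : Prop :=
  M x /\ exists y, M y /\ x = mul (mul x y) x.

Definition Pset (a : T) (x : T) : Prop := Sa a x /\ GreenL x (mul a x).

Definition is_inverse_monoid (M : T -> Prop) : Prop :=
  (forall x y, M x -> M y -> M (mul x y)) /\
  (exists e, M e /\ forall x, M x -> mul e x = x /\ mul x e = x) /\
  (forall x, M x -> exists y, M y /\ is_inverse x y /\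
                      forall z, M z -> is_inverse x z -> z = y).

End Semigroup.

(* Main.v *)
Require Import Defs.

Theorem theorem3p33 (T : Type) (mul : T -> T -> T)
  (mul_assoc : forall x y z, mul x (mul y z) = mul (mul x y) z)
  (a : T) (a_idem : mul a a = a)
  (huniq : forall x, (x = a \/ aSa mul a x) -> unique_inverse mul x) :
  (forall x, Reg mul (Sa mul a) x <-> Pset mul a x) /\
  (forall x, Pset mul a x <-> aSa mul a x) /\
  is_inverse_monoid mul (aSa mul a).
Proof.
  assert (HaSa : forall x, aSa mul a x -> mul a x = x /\ mul x a = x).
  { intros x [s ->]. split.
    - rewrite !mul_assoc, a_idem. reflexivity.
    - rewrite <- mul_assoc, a_idem. reflexivity. }
  assert (HaSaI : forall x, mul a x = x -> mul x a = x -> aSa mul a x).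
  { intros x H1 H2. exists x. rewrite H1, H2. reflexivity. }
  assert (Hinv : forall x, aSa mul a x -> exists y, aSa mul a y /\ is_inverse mul x y
                  /\ forall z, is_inverse mul x z -> z = y).
  { intros x Hx. destruct (HaSa x Hx) as [Hax Hxa].
    destruct (huniq x (or_intror Hx)) as [y0 [[Hi1 Hi2] Hu]].
    assert (Lax : forall u, mul (mul u a) x = mul u x).
    { intros u. rewrite <- mul_assoc, Hax. reflexivity. }
    assert (Lxa : forall u, mul (mul u x) a = mul u x).
    { intros u. rewrite <- mul_assoc, Hxa. reflexivity. }
    assert (L : forall u, mul (mul (mul u y0) x) y0 = mul u y0).
    { intros u. rewrite <- (mul_assoc u y0 x), <- (mul_assoc u (mul y0 x) y0), <- Hi2.
      reflexivity. }
    assert (Hy : is_inverse mul x (mul (mul a y0) a)).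
    { split.
      - rewrite !mul_assoc, Hxa, Lax. exact Hi1.
      - rewrite !mul_assoc, Lax, Lxa, L. reflexivity. }
    pose proof (Hu _ Hy) as Heq.
    exists y0. split; [|split; [split; assumption | exact Hu]].
    exists y0. symmetry. exact Heq. }
  assert (P_aSa : forall x, Pset mul a x -> aSa mul a x).
  { intros x [[s Hs] [[Hg|[t Ht]] _]].
    - apply HaSaI; [symmetry; exact Hg|].
      rewrite Hs, <- mul_assoc, a_idem. reflexivity.
    - assert (Hxa : mul x a = x) by (rewrite Hs, <- mul_assoc, a_idem; reflexivity).
      assert (Hz : aSa mul a (mul a x)).
      { apply HaSaI.
        - rewrite mul_assoc, a_idem. reflexivity.
        - rewrite <- mul_assoc, Hxa. reflexivity. }
      remember (mul a x) as z eqn:Ez.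
      destruct (Hinv z Hz) as [z' [Hz' [[Hi1 Hi2] _]]].
      destruct (HaSa z' Hz') as [Haz' Hz'a].
      assert (E1 : mul z' x = mul z' z).
      { rewrite Ez, mul_assoc, Hz'a. reflexivity. }
      assert (Iz : is_inverse mul z' z) by (split; assumption).
      assert (Ix : is_inverse mul z' x).
      { split.
        - rewrite E1. exact Hi2.
        - rewrite <- mul_assoc, E1, mul_assoc.
          transitivity (mul t z); [exact Ht|].
          rewrite <- mul_assoc, Ht.
          rewrite <- mul_assoc, (mul_assoc z z' z), <- Hi1. reflexivity. }
      destruct (huniq z' (or_intror Hz')) as [w [_ Hw]].
      assert (Hxz : x = z) by (rewrite (Hw _ Ix), (Hw _ Iz); reflexivity).
      rewrite Hxz. exact Hz. }
  assert (aSa_P : forall x, aSa mul a x -> Pset mul a x).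
  { intros x Hx. destruct (HaSa x Hx) as [Hax Hxa]. split.
    - destruct Hx as [s Hs]. exists (mul a s). exact Hs.
    - split; left; [symmetry|]; exact Hax. }
  split; [|split].
  - intros x. split.
    + intros [Hx [y [[y' Hy'] Hxy]]]. split; [exact Hx|]. split.
      * right. exists (mul x y').
        rewrite mul_assoc, <- (mul_assoc x y' a), <- Hy'. exact Hxy.
      * right. exists a. reflexivity.
    + intros HP. pose proof (P_aSa x HP) as Hx.
      destruct (Hinv x Hx) as [y [Hy [[Hi1 _] _]]]. split.
      * destruct Hx as [s Hs]. exists (mul a s). exact Hs.
      * exists y. split; [|exact Hi1].
        destruct Hy as [s Hs]. exists (mul a s). exact Hs.
  - intros x. split; [apply P_aSa | apply aSa_P].
  - split; [|split].
    + intros x y Hx Hy. destruct (HaSa x Hx) as [Hax _]. destruct (HaSa y Hy) as [_ Hya].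
      apply HaSaI.
      * rewrite mul_assoc, Hax. reflexivity.
      * rewrite <- mul_assoc, Hya. reflexivity.
    + exists a. split.
      * apply HaSaI; exact a_idem.
      * intros x Hx. exact (HaSa x Hx).
    + intros x Hx. destruct (Hinv x Hx) as [y [Hy [Hi Hu]]].
      exists y. split; [exact Hy|]. split; [exact Hi|].
      intros z _ Hz. exact (Hu z Hz).
Qed.
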